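(* Let $\mathcal{T}$ be a finite tree, $w:V(\mathcal{T})\to\mathbb{R}_{\ge0}$, $m=w(\mathcal{T})$, and let $c$ be a centroid of $(\mathcal{T},w)$. Then $$\mathtt{OPT}(\mathcal{T},w)\ge\frac m2+\frac{w(c)}2+\sum_{\mathcal{H}\in\mathbb{C}(\mathcal{T}-c)}\mathtt{OPT}(\mathcal{H},w).$$
   Context: $\mathbb{C}(G)$ denotes the set of connected components of a graph $G$. For a subgraph $\mathcal{H}$, $w(\mathcal{H})=\sum_{x\in V(\mathcal{H})}w(x)$, and $w$ also denotes its restriction to $V(\mathcal{H})$. A search tree on a tree $\mathcal{T}$ is a rooted tree $T$ with vertex set $V(\mathcal{T})$ defined recursively: its root is an arbitrary vertex $r$, and the children of $r$ are the roots of search trees built on the connected components of $\mathcal{T}-r$; a single-vertex tree has only itself as search tree. $\mathtt{cost}_w(T)=\sum_x w(x)\,\mathtt{depth}_T(x)$ with root depth $1$; $\mathtt{OPT}(\mathcal{T},w)$ is the minimum cost over all search trees on $\mathcal{T}$. A vertex $v$ is a centroid of $(\mathcal{T},w)$ if each component $\mathcal{H}$ of $\mathcal{T}-v$ has $w(\mathcal{H})\le w(\mathcal{T})/2$. *)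

(* Defs.v *)
From HB Require Import structures.
From mathcomp Require Import all_boot all_order all_algebra.
From mathcomp Require Import classical_sets reals.
Set Implicit Arguments. Unset Strict Implicit. Unset Printing Implicit Defensive.
Import Order.TTheory GRing.Theory Num.Theory.

Section Defs.
Variable T : finType.
Variable e : rel T.

(* A finite tree: e symmetric and irreflexive (simple graph), connected,
   and without (simple) cycles of length >= 3. *)
Definition acyclic : Prop :=
  ~ exists (x : T) (p : seq T),
      [/\ path e x p, uniq (x :: p), 2 <= size p & e (last x p) x].
Definition is_tree : Prop :=
  [/\ symmetric e, irreflexive e, (forall x y, connect e x y) & acyclic].

Definition induced (S : {set T}) : rel T :=
  [rel x y | [&& e x y, x \in S & y \in S]].

Definition comps (S : {set T}) : {set {set T}} :=
  [set [set y in S | connect (induced S) x y] | x in S].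

Inductive stree : Type := SNode : T -> seq stree -> stree.

Fixpoint vset (t : stree) : {set T} :=
  match t with SNode r ts => r |: foldr (fun c acc => vset c :|: acc) finset.set0 ts end.

(* t is a search tree on (the subgraph induced by) S: its root r lies in S and
   its children are search trees on the components of S - r, one for each. *)
Fixpoint is_st (S : {set T}) (t : stree) : bool :=
  match t with
  | SNode r ts =>
      [&& r \in S, perm_eq (map vset ts) (enum (comps (S :\ r)))
        & all (fun c => is_st (vset c) c) ts]
  end.

Variable R : realType.
Variable w : T -> R.

(* cost_w(t) = sum_x w(x) * depth_t(x), root has depth 1 *)
Fixpoint costd (d : nat) (t : stree) : R :=
  match t with
  | SNode r ts => (d%:R * w r + foldr (fun c acc => costd d.+1 c + acc) 0 ts)%R
  end.
Definition cost (t : stree) : R := costd 1 t.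

Definition OPT (S : {set T}) : R :=
  inf [set x | exists t, is_st S t /\ cost t = x].

Definition allV : {set T} := @finset.setTfor T.

Definition wt (S : {set T}) : R := (\sum_(x in S) w x)%R.

Definition centroid (c : T) : Prop :=
  forall H, H \in comps (allV :\ c) -> (wt H <= wt allV / 2%:R)%R.
End Defs.

(* Main.v *)
Require Import Defs.
From HB Require Import structures.
From mathcomp Require Import all_boot all_order all_algebra.
From mathcomp Require Import classical_sets reals boolp.
From mathcomp Require Import ring lra.
Import Order.TTheory GRing.Theory Num.Theory.
Local Open Scope ring_scope.
Set Implicit Arguments. Unset Strict Implicit. Unset Printing Implicit Defensive.

Definition stree_ind' (T : finType) (P : stree T -> Prop)
  (H : forall r ts, (forall c, List.In c ts -> P c) -> P (SNode r ts)) : forall t, P t :=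
  fix F t := match t with SNode r ts => H r ts
    ((fix G (l : seq (stree T)) : forall c, List.In c l -> P c :=
      match l with
      | nil => fun c (h : List.In c nil) => False_ind _ h
      | cons c' l' => fun c h => match h with
           | or_introl E => eq_ind c' P (F c') c E
           | or_intror h' => G l' c h' end end) ts) end.

Lemma foldr_sum (T : finType) (R : realType) (f : stree T -> R) ts :
  foldr (fun c acc => f c + acc) 0 ts = \sum_(c <- ts) f c.
Proof. by elim: ts => [|c ts IH]; rewrite ?big_nil ?big_cons //= IH. Qed.

Lemma costdE (T : finType) (R : realType) (w : T -> R) d r ts :
  costd w d (SNode r ts) = d%:R * w r + \sum_(c <- ts) costd w d.+1 c.
Proof. by rewrite /= foldr_sum. Qed.

Lemma costd_ge0 (T : finType) (R : realType) (w : T -> R) :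
  (forall x, 0 <= w x) -> forall t d, 0 <= costd w d t.
Proof.
move=> w0; elim/stree_ind' => r ts IH d; rewrite costdE.
apply: addr_ge0; first by apply: mulr_ge0.
elim: ts IH => [|c ts IHl] IH; rewrite ?big_nil ?big_cons //.
apply: addr_ge0; first by apply: IH; left.
by apply: IHl => c' h; apply: IH; right.
Qed.

Lemma costd_add (T : finType) (R : realType) (u v : T -> R) t d :
  costd (fun x => u x + v x) d t = costd u d t + costd v d t.
Proof.
elim/stree_ind': t d => r ts IH d; rewrite !costdE mulrDr.
suff -> : \sum_(c <- ts) costd (fun x => u x + v x) d.+1 c =
  \sum_(c <- ts) costd u d.+1 c + \sum_(c <- ts) costd v d.+1 c by ring.
rewrite -big_split /=.
elim: ts IH => [|c ts IHl] IH; rewrite ?big_nil ?big_cons //.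
by rewrite IH ?IHl //; [move=> c' h; apply: IH; right | left].
Qed.

Lemma vsetE (T : finType) r (ts : seq (stree T)) :
  vset (SNode r ts) = r |: \big[@finset.setU _/finset.set0]_(c <- ts) vset c.
Proof. by rewrite /=; congr (_ |: _); elim: ts => [|c ts IH]; rewrite ?big_nil ?big_cons /= ?IH. Qed.

Lemma costd_ext (T : finType) (R : realType) (u v : T -> R) t d :
  (forall x, x \in vset t -> u x = v x) -> costd u d t = costd v d t.
Proof.
elim/stree_ind': t d => r ts IH d H.

rewrite !costdE (H r); last by rewrite vsetE setU11.
congr (_ + _).
have Hs : forall c x, List.In c ts -> x \in vset c -> u x = v x.
  move=> c x hc hx; apply: H; rewrite vsetE; apply/setU1P; right.
  clear IH; elim: ts hc => [|c' ts IHl] //= [->|h]; rewrite big_cons.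
    by apply/setUP; left.
  by apply/setUP; right; apply: IHl.
elim: ts IH Hs {H} => [|c ts IHl] IH Hs; rewrite ?big_nil ?big_cons //.
rewrite IH; [|by left| by move=> x; apply: Hs; left].
by rewrite IHl // => [c' h|c' x h]; [apply: IH|apply: Hs]; right.
Qed.

Lemma comps_eqp (T : finType) (e : rel T) S :
  comps e S = equivalence_partition (connect (induced e S)) S.
Proof. by []. Qed.

Lemma comps_partition (T : finType) (e : rel T) S : symmetric e ->
  finset.partition (comps e S) S.
Proof.
move=> se; rewrite comps_eqp; apply: equivalence_partitionP => x y z _ _ _.
split; first exact: connect0.
have si : connect_sym (induced e S).
  apply: sym_connect_sym => a b /=.

rewrite /induced /= se; by case: (a \in S); case: (b \in S); rewrite ?andbF.
move=> hxy; apply/idP/idP => h.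
  by apply: connect_trans h; rewrite si.
by apply: connect_trans hxy h.
Qed.

Lemma comps_sub (T : finType) (e : rel T) S C : C \in comps e S -> C \subset S.
Proof. by case/imsetP => x _ ->; apply/fintype.subsetP => y; rewrite inE => /andP[]. Qed.

Lemma comps_mem (T : finType) (e : rel T) S C : C \in comps e S -> exists x, x \in C.
Proof. by case/imsetP => x xS ->; exists x; rewrite inE xS connect0. Qed.

Lemma sum_comps (T : finType) (e : rel T) (R : realType) (u : T -> R) S :
  symmetric e -> \sum_(C in comps e S) wt u C = wt u S.
Proof.
move=> se; have /and3P[/eqP cov triv _] := comps_partition S se.
by rewrite /wt -{2}cov big_trivIset.
Qed.

Lemma all_In (A : Type) (p : pred A) (s : seq A) c : all p s -> List.In c s -> p c.
Proof. by elim: s => [|a s IH] //= /andP[pa ps] [<-|h] //; apply: IH. Qed.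

Lemma sum_children (T : finType) (e : rel T) (R : realType) (f : {set T} -> R) ts X :
  perm_eq (map (@vset T) ts) (enum (comps e X)) ->
  \sum_(c <- ts) f (vset c) = \sum_(C in comps e X) f C.
Proof. by move=> p; rewrite -(big_map (@vset T) xpredT f) (perm_big _ p) big_enum. Qed.

Lemma vset_st (T : finType) (e : rel T) S t : symmetric e -> is_st e S t -> vset t = S.
Proof.
move=> se; case: t => r ts /= /and3P[rS p _].
have -> : foldr (fun c acc => vset c :|: acc) finset.set0 ts = finset.cover (comps e (S :\ r)).
  transitivity (\big[@finset.setU _/finset.set0]_(c <- ts) vset c).
    by elim: ts {p} => [|c ts IH]; rewrite ?big_nil ?big_cons //= IH.
  rewrite -(big_map (@vset T) xpredT id) (perm_big _ p) big_enum.
  by [].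
have /and3P[/eqP -> _ _] := comps_partition (S :\ r) se.
by rewrite finset.setD1K.
Qed.

Lemma costd_shift (T : finType) (e : rel T) (R : realType) (u : T -> R) :
  symmetric e -> forall t S d, is_st e S t -> costd u d.+1 t = costd u d t + wt u S.
Proof.
move=> se; elim/stree_ind' => r ts IH S d st.
have /= /and3P[rS p al] := st.

rewrite !foldr_sum /wt (big_setD1 _ rS) /=.
have -> : \sum_(c <- ts) costd u d.+2 c = \sum_(c <- ts) costd u d.+1 c + \sum_(c <- ts) wt u (vset c).
  rewrite -big_split /=.
  elim: ts IH {p st} al => [|c ts IHl] IH al; rewrite ?big_nil ?big_cons //.
  move: al => /= /andP[h al].
  by rewrite (IH c (or_introl erefl) (vset c)) // IHl // => c' h'; apply: IH; right.
rewrite (sum_children (fun C => wt u C) p) sum_comps // /wt -natr1; ring.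
Qed.

Lemma build (T : finType) (P : stree T -> Prop) (L : seq {set T}) :
  (forall C, C \in L -> exists t, vset t = C /\ P t) ->
  exists ts, map (@vset T) ts = L /\ (forall c, List.In c ts -> P c).
Proof.
elim: L => [|C L IH] H; first by exists [::].
have [t [vt Pt]] := H C (mem_head _ _).
have [ts [vts Pts]] : exists ts, map (@vset T) ts = L /\ (forall c, List.In c ts -> P c).
  by apply: IH => C' h; apply: H; rewrite inE h orbT.
by exists (t :: ts); split; [rewrite /= vt vts | move=> c /= [<-|h]; [|apply: Pts]].
Qed.

Lemma In_all (A : Type) (p : pred A) (s : seq A) : (forall c, List.In c s -> p c) -> all p s.
Proof. elim: s => [|a s IH] //= H; apply/andP; split; [by apply: H; left | by apply: IH => c h; apply: H; right]. Qed.

Lemma st_exists (T : finType) (e : rel T) : symmetric e ->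
  forall (X : {set T}) x, x \in X -> exists t, is_st e X t.
Proof.
move=> se; suff H : forall n (X : {set T}) x, (#|X| <= n)%N -> x \in X -> exists t, is_st e X t.
  by move=> X x; apply: H (leqnn _).
elim=> [|n IHn] X x hX xX.
  by move: hX; rewrite leqNgt; case/negP; apply/card_gt0P; exists x.
have H0 : forall C, C \in enum (comps e (X :\ x)) -> exists t, vset t = C /\ is_st e (vset t) t.
  move=> C; rewrite mem_enum => hC.
  have [y yC] := comps_mem hC.
  have sub := comps_sub hC.
  have [t st] : exists t, is_st e C t.
    apply: (IHn C y _ yC); rewrite -ltnS; apply: leq_trans hX.
    apply: (@leq_ltn_trans #|X :\ x|); first exact: subset_leq_card.
    by rewrite (cardsD1 x X) xX.
  by exists t; rewrite (vset_st se st).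
have [ts [vts Pts]] := @build T (fun c => is_st e (vset c) c) _ H0.
exists (SNode x ts); rewrite /= xX vts perm_refl /=.
exact: In_all.
Qed.

Lemma cost_root (T : finType) (e : rel T) (R : realType) (u : T -> R) S r ts :
  symmetric e -> is_st e S (SNode r ts) ->
  cost u (SNode r ts) = wt u S + \sum_(c <- ts) cost u c.
Proof.
move=> se st; have /= /and3P[rS p al] := st.
rewrite /cost costdE /wt (big_setD1 _ rS) /=.
have -> : \sum_(c <- ts) costd u 2 c = \sum_(c <- ts) costd u 1 c + \sum_(c <- ts) wt u (vset c).
  rewrite -big_split /=; clear p st.
  elim: ts al => [|c ts IHl] al; rewrite ?big_nil ?big_cons //.
  move: al => /= /andP[h al].
  by rewrite (@costd_shift _ _ _ u se c (vset c) 1%N h) IHl.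
rewrite (sum_children (fun C => wt u C) p) sum_comps // /wt; ring.
Qed.

Definition FF (T : finType) (e : rel T) (R : realType) (u : T -> R) (X : {set T}) :=
  \sum_(C in comps e X) OPT e u C.

Lemma ler_sum_In (T : Type) (R : realType) (f g : T -> R) ts :
  (forall c, List.In c ts -> f c <= g c) -> \sum_(c <- ts) f c <= \sum_(c <- ts) g c.
Proof.
elim: ts => [|c ts IH] H; rewrite ?big_nil ?big_cons //.
apply: lerD; [apply: H; left | apply: IH => c' h; apply: H; right] => //.
Qed.

Lemma seq_min (A : eqType) (R : realType) (f : A -> R) (s : seq A) x :
  x \in s -> exists2 r, r \in s & forall r', r' \in s -> f r <= f r'.
Proof.
elim: s x => [|a s IH] x //= _.
case: s IH => [|b s] IH.
  by exists a => [|r']; rewrite ?inE // => /eqP ->.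
have [r rs hr] := IH b (mem_head _ _).
have [far|] := lerP (f a) (f r).
  exists a; first exact: mem_head.
  move=> r'; rewrite inE => /orP[/eqP ->//|h].
  exact: le_trans far (hr _ h).
move=> fra; exists r; first by rewrite inE rs orbT.
move=> r'; rewrite inE => /orP[/eqP ->|h]; [exact: ltW | exact: hr].
Qed.

Section O.
Lemma OPT_lb (T : finType) (e : rel T) (R : realType) (u : T -> R) (S : {set T}) t :
  (forall x, 0 <= u x) -> is_st e S t -> OPT e u S <= cost u t.
Proof.
move=> u0 st; rewrite /OPT; apply: ge_inf; last by exists t.
by exists 0 => y [t' [_ <-]]; apply: costd_ge0.
Qed.

Lemma OPT_glb (T : finType) (e : rel T) (R : realType) (u : T -> R) (S : {set T}) x a :
  symmetric e -> x \in S -> (forall t, is_st e S t -> a <= cost u t) -> a <= OPT e u S.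
Proof.
move=> se xS H; rewrite /OPT; apply: lb_le_inf.
  by have [t st] := st_exists se xS; exists (cost u t); exists t.
by move=> y [t [st <-]]; apply: H.
Qed.

Lemma OPT_approx (T : finType) (e : rel T) (R : realType) (u : T -> R) (S : {set T}) x eps :
  (forall x, 0 <= u x) -> symmetric e -> x \in S -> 0 < eps ->
  exists t, is_st e S t /\ cost u t <= OPT e u S + eps.
Proof.
move=> u0 se xS ep.
have hi : has_inf [set x | exists t, is_st e S t /\ cost u t = x].
  split; first by have [t st] := st_exists se xS; exists (cost u t); exists t.
  by exists 0 => y [t' [_ <-]]; apply: costd_ge0.
have [y [t [st <-]] lt] := inf_adherent ep hi.
by exists t; split => //; apply: ltW.
Qed.
End O.

Lemma O1 (T : finType) (e : rel T) (R : realType) (u : T -> R) (S : {set T}) r :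
  (forall x, 0 <= u x) -> symmetric e -> r \in S ->
  OPT e u S <= wt u S + FF e u (S :\ r).
Proof.
move=> u0 se rS; apply/ler_addgt0Pr => eps ep.
set n := #|comps e (S :\ r)|.
have n0 : (0:R) <= n%:R by [].
have ep' : 0 < eps / (n%:R + 1) by apply: divr_gt0 => //; lra.
have H0 : forall C, C \in enum (comps e (S :\ r)) -> exists t, vset t = C /\
    (is_st e (vset t) t /\ cost u t <= OPT e u (vset t) + eps / (n%:R + 1)).
  move=> C; rewrite mem_enum => hC.
  have [y yC] := comps_mem hC.
  have [t [st le]] := OPT_approx u0 se yC ep'.
  by exists t; rewrite (vset_st se st).
have [ts [vts Pts]] := @build T _ _ H0.
have st : is_st e S (SNode r ts).
  by rewrite /= rS vts perm_refl /=; apply: In_all => c h; case: (Pts c h).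
apply: le_trans (OPT_lb u0 st) _.
rewrite (cost_root u se st) -addrA lerD2l.
apply: le_trans (ler_sum_In (g := fun c => OPT e u (vset c) + eps / (n%:R + 1)) _) _.
  by move=> c h; case: (Pts c h).
have p : perm_eq (map (@vset T) ts) (enum (comps e (S :\ r))) by rewrite vts.
rewrite (sum_children (fun C => OPT e u C + eps / (n%:R + 1)) p) big_split /= lerD2l.
rewrite sumr_const -/n -[eps / _ *+ n]mulr_natl mulrA ler_pdivrMr; last by lra.
nra.
Qed.

Lemma O2 (T : finType) (e : rel T) (R : realType) (u : T -> R) (S : {set T}) x :
  (forall x, 0 <= u x) -> symmetric e -> x \in S ->
  exists2 r, r \in S & wt u S + FF e u (S :\ r) <= OPT e u S.
Proof.
move=> u0 se xS.
have xs : x \in enum S by rewrite mem_enum.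
have [r rs hr] := seq_min (fun r => FF e u (S :\ r)) xs.
rewrite mem_enum in rs; exists r => //.
apply: (OPT_glb se xS) => -[r' ts] st.
have /= /and3P[r'S p al] := st.
rewrite (cost_root u se st) lerD2l.
apply: le_trans (hr r' _) _; first by rewrite mem_enum.
rewrite /FF -(sum_children (fun C => OPT e u C) p).
apply: ler_sum_In => c h; apply: OPT_lb => //; exact: all_In al h.
Qed.

Lemma OPT_ext (T : finType) (e : rel T) (R : realType) (u v : T -> R) (S : {set T}) :
  symmetric e -> (forall x, x \in S -> u x = v x) -> OPT e u S = OPT e v S.
Proof.
move=> se H; rewrite /OPT; congr inf; apply: funext => y; apply: propext.
by split => -[t [st <-]]; exists t; split => //; apply: costd_ext => z;
  rewrite (vset_st se st) => /H.
Qed.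

Lemma FF_ext (T : finType) (e : rel T) (R : realType) (u v : T -> R) (S : {set T}) :
  symmetric e -> (forall x, x \in S -> u x = v x) -> FF e u S = FF e v S.
Proof.
move=> se H; apply: eq_bigr => C hC; apply: OPT_ext => // z zC.
apply: H; exact: (fintype.subsetP (comps_sub hC)).
Qed.

Lemma OPT_superadd (T : finType) (e : rel T) (R : realType) (u v : T -> R) (S : {set T}) x :
  (forall x, 0 <= u x) -> (forall x, 0 <= v x) -> symmetric e -> x \in S ->
  OPT e u S + OPT e v S <= OPT e (fun y => u y + v y) S.
Proof.
move=> u0 v0 se xS; apply: (OPT_glb se xS) => t st.
by rewrite /cost costd_add lerD // OPT_lb.
Qed.

Lemma FF_superadd (T : finType) (e : rel T) (R : realType) (u v : T -> R) (S : {set T}) :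
  (forall x, 0 <= u x) -> (forall x, 0 <= v x) -> symmetric e ->
  FF e u S + FF e v S <= FF e (fun y => u y + v y) S.
Proof.
move=> u0 v0 se; rewrite /FF -big_split /=; apply: ler_sum => C hC.
have [y yC] := comps_mem hC; exact: (OPT_superadd u0 v0 se yC).
Qed.

Lemma connect_inv (T : finType) (e1 e2 : rel T) (P : pred T) x y :
  (forall a b, P a -> e1 a b -> P b && e2 a b) -> P x -> connect e1 x y -> P y && connect e2 x y.
Proof.
move=> H Px /connectP[p pth ->]; elim: p x Px pth => [|z p IH] x Px /=; first by rewrite Px connect0.
case/andP => exz pth; have /andP[Pz e2z] := H _ _ Px exz.
have /andP[-> c] := IH z Pz pth; rewrite /=.
exact: connect_trans (connect1 e2z) c.
Qed.

Definition noedge (T : finType) (e : rel T) (A B : {set T}) :=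
  forall a b, a \in A -> b \in B -> ~~ e a b.

Lemma compU (T : finType) (e : rel T) (A B : {set T}) x : noedge e A B -> x \in A ->
  [set y in A :|: B | connect (induced e (A :|: B)) x y] =
  [set y in A | connect (induced e A) x y].
Proof.
move=> ne xA; apply/setP => y; rewrite !inE; apply/idP/idP.
  case/andP => _ c.
  have := @connect_inv T (induced e (A :|: B)) (induced e A) (mem A) x y _ xA c.
  apply.
  move=> a b /= aA /and3P[eab _]; rewrite !inE => /orP[bA|bB].
    by rewrite bA /induced /= eab aA bA.
  by case/negP: (ne a b aA bB).
case/andP => yA c; rewrite yA /=.
apply: connect_sub c => a b /and3P[eab aA bA]; apply: connect1.
by rewrite /induced /= eab !inE aA bA.
Qed.

Lemma Gsep (T : finType) (e : rel T) (A B : {set T}) : symmetric e ->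
  noedge e A B -> comps e (A :|: B) = comps e A :|: comps e B.
Proof.
move=> se ne; rewrite /comps imsetU; congr (_ :|: _).
  by apply: eq_in_imset => x xA; apply: compU.
apply: eq_in_imset => x xB; rewrite finset.setUC; apply: compU => // b a bB aA.
by rewrite se; apply: ne.
Qed.

Lemma FF_sep (T : finType) (e : rel T) (R : realType) (u : T -> R) (A B : {set T}) :
  symmetric e -> [disjoint A & B] -> noedge e A B ->
  FF e u (A :|: B) = FF e u A + FF e u B.
Proof.
move=> se dAB ne; rewrite /FF (Gsep se ne).
rewrite (eq_bigl [predU (comps e A) & (comps e B)]); last by move=> C; rewrite !inE.
apply: bigU; apply/pred0P => C /=; apply/negP => /andP[hA hB].
have [x xC] := comps_mem hA.
move/disjoint_setI0: dAB => /setP/(_ x); rewrite !inE.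
by rewrite (fintype.subsetP (comps_sub hA) _ xC) (fintype.subsetP (comps_sub hB) _ xC).
Qed.

Lemma comp_noedge (T : finType) (e : rel T) (X K : {set T}) :
  K \in comps e X -> noedge e K (X :\: K).
Proof.
case/imsetP => x xX -> a b; rewrite !inE => /andP[aX cxa] /andP[nb bX].
apply/negP => eab; case/negP: nb; rewrite bX /=.
apply: connect_trans cxa (connect1 _); by rewrite /induced /= eab aX bX.
Qed.

Lemma comps_self (T : finType) (e : rel T) (K : {set T}) :
  symmetric e -> K \in comps e K -> comps e K = [set K].
Proof.
move=> se hK; apply/setP => C; rewrite inE; apply/idP/idP => [hC|/eqP ->//].
apply/negPn/negP => nCK.
have /and3P[_ /finset.trivIsetP tr _] := comps_partition K se.
have := tr _ _ hC hK nCK; have [y yC] := comps_mem hC.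
move/disjoint_setI0/setP/(_ y); rewrite !inE yC.
by rewrite (fintype.subsetP (comps_sub hC) _ yC).
Qed.

Lemma comp_self (T : finType) (e : rel T) (X K : {set T}) :
  symmetric e -> K \in comps e X -> K \in comps e K.
Proof.
move=> se hK; have := hK; case/imsetP => x xX Kdef.
have xK : x \in K by rewrite Kdef inE xX connect0.
apply/imsetP; exists x => //; apply/setP => y; rewrite inE.
apply/idP/idP => [yK|/andP[] //].
rewrite yK /=; move: yK; rewrite {1}Kdef inE => /andP[yX cxy].
suff H : forall a b, a \in K -> induced e X a b -> (b \in K) && induced e K a b.
  by have /andP[] := @connect_inv T (induced e X) (induced e K) (mem K) x y H xK cxy.
move=> a b /= aK /and3P[eab aX bX].
have bK : b \in K.
  move: aK; rewrite Kdef !inE => /andP[_ cxa]; rewrite bX /=.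
  by apply: connect_trans cxa (connect1 _); rewrite /induced /= eab aX bX.
by rewrite bK /induced /= eab aK bK.
Qed.

Lemma FF_comp (T : finType) (e : rel T) (R : realType) (u : T -> R) (X K : {set T}) :
  symmetric e -> K \in comps e X -> FF e u X = OPT e u K + FF e u (X :\: K).
Proof.
move=> se hK.
have sub := comps_sub hK.
have eX : X = K :|: (X :\: K).
  apply/setP => y; rewrite !inE; case yK: (y \in K) => //=.
  by rewrite (fintype.subsetP sub _ yK).
have dK : [disjoint K & X :\: K].
  by apply/pred0P => y /=; rewrite !inE; case: (y \in K).
rewrite {1}eX (FF_sep u se dK (comp_noedge hK)); congr (_ + _).
by rewrite /FF (comps_self se (comp_self se hK)) big_set1.
Qed.

Lemma wt_ge0 (T : finType) (R : realType) (u : T -> R) A :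
  (forall x, 0 <= u x) -> 0 <= wt u A.
Proof. by move=> u0; apply: sumr_ge0. Qed.

Lemma wt_sub (T : finType) (R : realType) (u : T -> R) (A B : {set T}) :
  (forall x, 0 <= u x) -> A \subset B -> wt u A <= wt u B.
Proof.
move=> u0 sAB; rewrite /wt [in X in _ <= X](big_setID A) /=.
by rewrite (finset.setIidPr sAB) lerDl sumr_ge0.
Qed.

Lemma wt_vanish (T : finType) (R : realType) (u : T -> R) (H S : {set T}) :
  H \subset S -> (forall x, x \in S -> x \notin H -> u x = 0) -> wt u H = wt u S.
Proof.
move=> sHS van; rewrite /wt [in RHS](big_setID H) /= (finset.setIidPr sHS) [X in _ = _ + X]big1 ?addr0 //.
by move=> y; rewrite !inE => /andP[nH yS]; apply: van.
Qed.

Lemma FF0 (T : finType) (e : rel T) (R : realType) (u : T -> R) :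
  FF e u finset.set0 = 0.
Proof. by rewrite /FF /comps imset0 big_set0. Qed.

Lemma FF_ge0 (T : finType) (e : rel T) (R : realType) (u : T -> R) X :
  (forall x, 0 <= u x) -> symmetric e -> 0 <= FF e u X.
Proof.
move=> u0 se; apply: sumr_ge0 => C hC; have [y yC] := comps_mem hC.
by apply: (OPT_glb se yC) => t _; apply: costd_ge0.
Qed.

Lemma K_bound (T : finType) (e : rel T) (R : realType) (u : T -> R) (H : {set T}) r :
  (forall x, 0 <= u x) -> symmetric e -> FF e u H <= wt u H + FF e u (H :\ r).
Proof.
move=> u0 se; case rH: (r \in H); last first.
  have -> : H :\ r = H.
    by apply/setP => y; rewrite !inE; case: eqP => // ->; rewrite rH.
  by rewrite lerDr wt_ge0.
set K0 := [set y in H | connect (induced e H) r y].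
have hK0 : K0 \in comps e H by apply/imsetP; exists r.
have rK0 : r \in K0 by rewrite inE rH connect0.
have sub := comps_sub hK0.
rewrite (FF_comp u se hK0).
have eH : H :\ r = (K0 :\ r) :|: (H :\: K0).
  apply/setP => y; rewrite finset.in_setU !finset.in_setD1 finset.in_setD; case yK: (y \in K0) => /=.
    by rewrite (fintype.subsetP sub _ yK) !andbT orbF.
  by rewrite andbF /=; case: (eqVneq y r) => [Er|//]; rewrite Er rK0 in yK.
have dK : [disjoint K0 :\ r & H :\: K0].
  by apply/pred0P => y /=; rewrite finset.in_setD1 finset.in_setD; case: (y \in K0); rewrite ?andbF.
have ne : noedge e (K0 :\ r) (H :\: K0).
  move=> a b; rewrite finset.in_setD1 => /andP[_ aK] bH; exact: comp_noedge hK0 a b aK bH.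
rewrite eH (FF_sep u se dK ne) addrA lerD2r.
apply: le_trans (O1 u0 se rK0) _; rewrite lerD2r.
exact: wt_sub.
Qed.

Lemma Gmain (T : finType) (e : rel T) (R : realType) : symmetric e ->
  forall n (S : {set T}), (#|S| <= n)%N -> forall (u : T -> R) (H : {set T}),
  (forall x, 0 <= u x) -> H \subset S -> (forall x, x \in S -> x \notin H -> u x = 0) ->
  FF e u H <= FF e u S.
Proof.
move=> se n S hS u H u0 sHS van.
case: (set_0Vmem S) => [S0|[x xS]].
  have H0 : H = finset.set0 by apply/eqP; rewrite -finset.subset0 -S0.
  by rewrite S0 H0 FF0.
elim: n S hS u H u0 sHS van x xS => [|n IHn] S hS u H u0 sHS van x xS.
  by move: hS; rewrite leqNgt; case/negP; apply/card_gt0P; exists x.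
set K := [set y in S | connect (induced e S) x y].
have hK : K \in comps e S by apply/imsetP; exists x.
have xK : x \in K by rewrite inE xS connect0.
have sub := comps_sub hK.
rewrite (FF_comp u se hK).
case: (eqVneq K S) => [KS | nKS].
  rewrite KS finset.setDv FF0 addr0.
  have [r rS hr] := O2 u0 se xS.
  apply: le_trans (K_bound _ r u0 se) _.
  apply: le_trans hr.
  rewrite (wt_vanish sHS van) lerD2l.
  case: (set_0Vmem (S :\ r)) => [S0|[z zS]].
    have H0 : H :\ r = finset.set0.
      by apply/eqP; rewrite -finset.subset0 -S0; apply: finset.setSD.
    by rewrite S0 H0.
  apply: (IHn _ _ _ _ u0 _ _ z zS).
  - by move: hS; rewrite (cardsD1 r S) rS.
  - by apply: finset.setSD.
  - move=> y; rewrite !finset.in_setD1 => /andP[yr yS]; rewrite yr /=; exact: van.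
have ltK : (#|K| < #|S|)%N by apply: proper_card; rewrite finset.properEneq nKS sub.
have ltSK : (#|S :\: K| < #|S|)%N.
  apply: proper_card; rewrite finset.properEneq finset.subsetDl andbT.
  by apply/eqP => E; move: xS; rewrite -E finset.in_setD xK.
have eH : H = (H :&: K) :|: (H :\: K).
  apply/setP => y; rewrite finset.in_setU finset.in_setI finset.in_setD.
  by case: (y \in K); rewrite ?andbT ?andbF ?orbF.
have dH : [disjoint H :&: K & H :\: K].
  by apply/pred0P => y /=; rewrite finset.in_setI finset.in_setD; case: (y \in K); rewrite ?andbF.
have ne : noedge e (H :&: K) (H :\: K).
  move=> a b; rewrite finset.in_setI finset.in_setD => /andP[_ aK] /andP[bK bH].
  apply: (comp_noedge hK aK); rewrite finset.in_setD bK.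
  exact: (fintype.subsetP sHS).
rewrite eH (FF_sep u se dH ne); apply: lerD.
  have FK : FF e u K = OPT e u K by rewrite /FF (comps_self se (comp_self se hK)) big_set1.
  rewrite -FK; apply: (IHn _ _ _ _ u0 _ _ x xK).
  - by rewrite -ltnS; apply: leq_trans ltK hS.
  - exact: subsetIr.
  - move=> y yK; rewrite finset.in_setI yK andbT; apply: van.
    exact: (fintype.subsetP sub).
case: (set_0Vmem (S :\: K)) => [S0|[z zS]].
  have H0 : H :\: K = finset.set0.
    by apply/eqP; rewrite -finset.subset0 -S0; apply: finset.setSD.
  by rewrite S0 H0.
apply: (IHn _ _ _ _ u0 _ _ z zS); first by rewrite -ltnS; apply: leq_trans ltSK hS.
  by apply: finset.setSD.
move=> y; rewrite !finset.in_setD => /andP[yK yS]; rewrite yK /=; exact: van.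
Qed.

Lemma FF_split (T : finType) (e : rel T) (R : realType) (u : T -> R) (X S : {set T}) :
  (forall x, 0 <= u x) -> symmetric e -> X \subset S ->
  FF e u X + FF e u (S :\: X) <= FF e u S.
Proof.
move=> u0 se sXS.
pose u1 := fun y => if y \in X then u y else 0.
pose u2 := fun y => if y \in X then 0 else u y.
have u10 : forall y, 0 <= u1 y by move=> y; rewrite /u1; case: (y \in X).
have u20 : forall y, 0 <= u2 y by move=> y; rewrite /u2; case: (y \in X).
have -> : FF e u X = FF e u1 X by apply: FF_ext => // y yX; rewrite /u1 yX.
have -> : FF e u (S :\: X) = FF e u2 (S :\: X).
  by apply: FF_ext => // y; rewrite finset.in_setD /u2 => /andP[/negbTE -> _].
have -> : FF e u S = FF e (fun y => u1 y + u2 y) S.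
  by apply: FF_ext => // y _; rewrite /u1 /u2; case: (y \in X); rewrite ?addr0 ?add0r.
apply: le_trans; last exact: (@FF_superadd _ _ _ u1 u2 S u10 u20 se).
apply: lerD.
  apply: (Gmain se (leqnn #|S|) u10 sXS) => y _ /negbTE; rewrite /u1 => ->.
  done.
apply: (Gmain se (leqnn #|S|) u20 (subsetDl _ _)) => y yS.
rewrite finset.in_setD yS andbT negbK /u2 => ->; done.
Qed.

Unset Implicit Arguments. Set Strict Implicit.

Theorem lemma1 (R : realType) (T : finType) (e : rel T) (w : T -> R) (c : T) :
  is_tree e ->
  (forall x, 0 <= w x) ->
  centroid e w c ->
  OPT e w (allV T) >=
    wt w (allV T) / 2%:R + w c / 2%:R
    + \sum_(H in comps e ((allV T) :\ c)) OPT e w H.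
Proof.
case=> se _ _ _ w0 cen.
set V := allV T.
have cV : c \in V by rewrite /V /allV inE.
rewrite -/(FF e w (V :\ c)).
have [r rV hr] := O2 w0 se cV.
have wV : wt w V = w c + wt w (V :\ c) by rewrite /wt (big_setD1 _ cV).
have wc0 := w0 c.
have wD0 : 0 <= wt w (V :\ c) := wt_ge0 _ w0.
case: (eqVneq r c) => [rc | rnc].
  move: hr; rewrite rc => hr; apply: le_trans hr; lra.
have rVc : r \in V :\ c by rewrite finset.in_setD1 rnc rV.
set H0 := [set y in V :\ c | connect (induced e (V :\ c)) r y].
have hH0 : H0 \in comps e (V :\ c) by apply/imsetP; exists r.
have rH0 : r \in H0 by rewrite inE rVc connect0.
have subH0 := comps_sub hH0.
have cH0 : c \notin H0.
  by apply/negP => /(fintype.subsetP subH0); rewrite finset.in_setD1 eqxx.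
have wH0 := cen _ hH0.
rewrite -/V in wH0.
set B := (V :\ c) :\: H0.
have E1 := FF_comp w se hH0.
have E2 := O1 w0 se rH0.
set S' := (V :\ r) :\: (H0 :\ r).
have s1 : H0 :\ r \subset V :\ r.
  by apply/fintype.subsetP => y; rewrite !finset.in_setD1 => /andP[-> _]; rewrite /V /allV inE.
have E3 := FF_split w0 se s1.
have s2 : [set c] \subset S'.
  rewrite finset.sub1set /S' finset.in_setD !finset.in_setD1 (negbTE cH0) andbF /=.
  by rewrite eq_sym rnc cV.
have E4 := FF_split w0 se s2.
have eB : S' :\: [set c] = B.
  apply/setP => y; rewrite /S' /B !finset.in_setD !finset.in_set1.
  case: (eqVneq y r) => [->|yr] /=; first by rewrite rH0 !andbF.
  by case: (y \in H0); case: (y != c).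
rewrite eB in E4.
have Ec : w c <= FF e w [set c].
  have [r' r'c hr'] := O2 w0 se (set11 c).
  have hc : [set c] \in comps e [set c].
    apply/imsetP; exists c; first exact: set11.
    apply/setP => y; rewrite !inE; case: eqP => [->|] //=; by rewrite connect0.
  rewrite /FF (comps_self se hc) big_set1.
  apply: le_trans hr'; rewrite /wt big_set1 lerDl; exact: FF_ge0.
rewrite -/B in E1.
lra.
Qed.
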